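(* Let $\mu$ be a centered log-concave probability measure on $\mathbb{R}^n$ with density $f$. Then for every $t\geq 6n$, $$\mu(R_t(\mu))\geq 1-e^{-t/5}.$$
   Context: A probability measure on $\mathbb{R}^n$ is log-concave (full-dimensional) if it has a density $f$ with $\ln f$ concave; it is centered if its barycenter $\int x f(x)\,dx$ is $0$. For $t\geq 0$, the super-level set is $R_t(\mu)=\{x\in\mathbb{R}^n: f(x)\geq e^{-t}\|f\|_\infty\}$. *)

(* Defs.v *)
(* R^n is modelled as n.-tuple R,
   which carries the product (= Borel) sigma-algebra of the library. *)
From mathcomp Require Import all_boot all_order all_algebra.
From mathcomp Require Import all_classical all_reals all_analysis.
Set Implicit Arguments. Unset Strict Implicit. Unset Printing Implicit Defensive.
Import Order.TTheory GRing.Theory Num.Theory.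
Local Open Scope classical_set_scope.
Local Open Scope ring_scope.

Section defs.
Variable R : realType.

(* Lebesgue integral on R^n of a (nonnegative) function, defined as the
   iterated one-dimensional Lebesgue integral (Tonelli). *)
Fixpoint leb_int (n : nat) : (n.-tuple R -> \bar R) -> \bar R :=
  match n return (n.-tuple R -> \bar R) -> \bar R with
  | 0 => fun g => g [tuple]
  | n'.+1 => fun g =>
      (\int[@lebesgue_measure R]_x leb_int (fun t : n'.-tuple R => g (cons_tuple x t)))%E
  end.

Definition dens_measure n (f : n.-tuple R -> R) (A : set (n.-tuple R)) : \bar R :=
  leb_int (fun x => ((\1_A x : R) * f x)%:E).

Definition tcomb n (l : R) (x y : n.-tuple R) : n.-tuple R :=
  [tuple l * tnth x i + (1 - l) * tnth y i | i < n].

(* f >= 0 with ln f concave (ln 0 = -oo), i.e.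
   f(l x + (1-l) y) >= f(x)^l f(y)^(1-l) *)
Definition log_concave n (f : n.-tuple R -> R) : Prop :=
  (forall x, 0 <= f x) /\
  forall x y (l : R), 0 <= l <= 1 ->
    f x `^ l * f y `^ (1 - l) <= f (tcomb l x y).

Definition prob_density n (f : n.-tuple R -> R) : Prop :=
  measurable_fun setT f /\ (forall x, 0 <= f x) /\
  leb_int (fun x => (f x)%:E) = 1%E.

(* barycenter of f is 0: each coordinate x_i is f-integrable and
   int x_i f(x) dx = 0 (positive part equals negative part) *)
Definition centered n (f : n.-tuple R -> R) : Prop :=
  forall i : 'I_n,
    (leb_int (fun x => (`|tnth x i| * f x)%:E) < +oo)%E /\
    leb_int (fun x => (Num.max (tnth x i) 0 * f x)%:E) =
    leb_int (fun x => (Num.max (- tnth x i) 0 * f x)%:E).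

Definition fsup n (f : n.-tuple R -> R) : \bar R :=
  ereal_sup [set (f x)%:E | x in setT].

Definition superlevel n (f : n.-tuple R -> R) (t : R) : set (n.-tuple R) :=
  [set x | ((expR (- t))%:E * fsup f <= (f x)%:E)%E].

End defs.

(* Main.v *)
Require Import Defs.
From mathcomp Require Import all_boot all_order all_algebra.
From mathcomp Require Import all_classical all_reals all_analysis.
From mathcomp Require Import measurable_realfun ring lra.
Import Order.TTheory GRing.Theory Num.Theory.
Local Open Scope classical_set_scope.
Local Open Scope ring_scope.
Section L.
Variable R : realType.
Local Open Scope ereal_scope.

Lemma leb_intS n (g : n.+1.-tuple R -> \bar R) :
  leb_int g = \int[@lebesgue_measure R]_x leb_int (fun t => g (cons_tuple x t)).
Proof. by []. Qed.

Lemma measurable_cons_tuple d (U : measurableType d) n (a : U -> R) (b : U -> n.-tuple R) :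
  measurable_fun setT a -> measurable_fun setT b ->
  measurable_fun setT (fun u => cons_tuple (a u) (b u)).
Proof. move=> ma mb; exact: (measurable_cons ma mb). Qed.

Lemma leb_int_ge0 n (g : n.-tuple R -> \bar R) :
  (forall x, 0 <= g x) -> 0 <= leb_int g.
Proof.
elim: n g => [|n IH] g g0 //=.
by apply: integral_ge0 => x _; apply: IH.
Qed.

Lemma mleb_int n : forall d (U : measurableType d) (G : U * n.-tuple R -> \bar R),
  measurable_fun setT G -> (forall z, 0 <= G z) ->
  measurable_fun setT (fun u => leb_int (fun t => G (u, t))).
Proof.
elim: n => [|n IH] d U G mG G0.
  rewrite /=; apply: (measurableT_comp mG).
  exact: measurable_fun_pair.
rewrite /=.
pose H (p : (U * R)%type * n.-tuple R) := G (p.1.1, cons_tuple p.1.2 p.2).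
have mH : measurable_fun setT H.
  apply: (measurableT_comp mG); apply: measurable_fun_pair.
    by apply: measurableT_comp => //.
  apply: measurable_cons_tuple => //.
  by apply: measurableT_comp => //.
have := IH _ _ H mH (fun z => G0 _) => mI.
have := @measurable_fun_fubini_tonelli_F _ _ U _ R (@lebesgue_measure R) _ mI.
apply.
by move=> z; apply: leb_int_ge0 => t; exact: G0.
Qed.

End L.
Section L2.
Variable R : realType.
Local Open Scope ereal_scope.
Implicit Types n : nat.

Lemma mleb_int_cons n (g : n.+1.-tuple R -> \bar R) :
  measurable_fun setT g -> (forall z, 0 <= g z) ->
  measurable_fun setT (fun x : R => leb_int (fun t => g (cons_tuple x t))).
Proof.
move=> mg g0.
pose G (p : (R * n.-tuple R)%type) := g (cons_tuple p.1 p.2).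
have mG : measurable_fun setT G.
  apply: (measurableT_comp mg); exact: measurable_cons_tuple.
exact: (@mleb_int R n _ R G mG (fun z => g0 _)).
Qed.

Lemma mcons n (g : n.+1.-tuple R -> \bar R) x :
  measurable_fun setT g -> measurable_fun setT (fun t : n.-tuple R => g (cons_tuple x t)).
Proof.
move=> mg; apply: (measurableT_comp mg); exact: measurable_cons_tuple.
Qed.

Arguments mcons {n g} x.

Lemma leb_int_le n (g h : n.-tuple R -> \bar R) :
  measurable_fun setT g -> measurable_fun setT h ->
  (forall x, 0 <= g x) -> (forall x, g x <= h x) -> leb_int g <= leb_int h.
Proof.
elim: n g h => [|n IH] g h mg mh g0 gh //=.
have h0 x : 0 <= h x by apply: le_trans (gh x).
apply: ge0_le_integral => //.
- by move=> x _; apply: leb_int_ge0.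
- exact: mleb_int_cons.
- exact: mleb_int_cons.
- move=> x _; apply: IH => //; try exact: mcons.
Qed.

Lemma leb_intD n (g h : n.-tuple R -> \bar R) :
  measurable_fun setT g -> measurable_fun setT h ->
  (forall x, 0 <= g x) -> (forall x, 0 <= h x) ->
  leb_int (fun x => g x + h x) = leb_int g + leb_int h.
Proof.
elim: n g h => [|n IH] g h mg mh g0 h0 //=.
under eq_integral => x _ do rewrite (IH _ _ (mcons x mg) (mcons x mh)) //.
apply: ge0_integralD => //.
- by move=> x _; apply: leb_int_ge0.
- exact: mleb_int_cons.
- by move=> x _; apply: leb_int_ge0.
- exact: mleb_int_cons.
Qed.

Lemma leb_intZ n (g : n.-tuple R -> \bar R) (k : \bar R) :
  measurable_fun setT g -> (forall x, 0 <= g x) -> 0 <= k ->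
  leb_int (fun x => k * g x) = k * leb_int g.
Proof.
elim: n g => [|n IH] g mg g0 k0 //=.
under eq_integral => x _ do rewrite (IH _ (mcons x mg)) //.
apply: ge0_integralZl => //.
- exact: mleb_int_cons.
- by move=> x _; apply: leb_int_ge0.
Qed.

Lemma leb_int_mct n (g : nat -> n.-tuple R -> \bar R) :
  (forall k, measurable_fun setT (g k)) -> (forall k x, 0 <= g k x) ->
  (forall x, nondecreasing_seq (g ^~ x)) ->
  leb_int (fun x => limn (g ^~ x)) = limn (fun k => leb_int (g k)).
Proof.
elim: n g => [|n IH] g mg g0 nd //=.
have E x : leb_int (fun t => limn (g ^~ (cons_tuple x t))) =
    limn (fun k => leb_int (fun t => g k (cons_tuple x t))).
  apply: (IH (fun k t => g k (cons_tuple x t))).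
  - by move=> k; apply: mcons.
  - by move=> k t; apply: g0.
  - by move=> t; apply: nd.
under eq_integral => x _ do rewrite E.
apply: monotone_convergence => //.
- by move=> k; apply: mleb_int_cons.
- by move=> k x _; apply: leb_int_ge0.
- move=> x _ a b ab; apply: leb_int_le => //; try by move=> t; apply: mcons.
  by move=> t; apply: nd.
Qed.

End L2.
Section L3.
Variable R : realType.

Lemma cv1 (a c : R) (g : R -> \bar R) : (0 < c)%R ->
  measurable_fun setT g -> (forall x, 0 <= g x)%E ->
  (\int[@lebesgue_measure R]_x g (a + c * x)%R = (c^-1)%:E * \int[@lebesgue_measure R]_x g x)%E.
Proof.
move=> c0 mg g0.
pose phi := (fun x : R => (a + c * x)%R) : measurableTypeR R -> measurableTypeR R.
have mphi : measurable_fun setT phi.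
  by apply: measurable_funD => //; apply: measurable_funM.
have ci : (0 <= c^-1)%R by rewrite invr_ge0 ltW.
pose k : {nonneg R} := NngNum ci.
have E := @ge0_integral_pushforward _ _ _ _ R phi mphi (@lebesgue_measure R) setT g
  measurableT mg (fun y _ => g0 y).
have c0' : (0 <= c)%R by apply: ltW.
have P A : measurable A -> pushforward (@lebesgue_measure R) phi A = mscale k (@lebesgue_measure R) A.
  move=> mA.
  have := @lebesgue_measure_unique R (mscale (NngNum c0') (pushforward (@lebesgue_measure R) phi)).
  move=> /(_ mphi) U.
  have H1 : (@lebesgue_measure R) A = (c%:E * pushforward (@lebesgue_measure R) phi A)%E.
    apply: U mA => _ [[x1 x2] _ <-].
    change (lebesgue_measure `]x1, x2]%classic = (c%:E * lebesgue_measure (phi @^-1` `]x1, x2]%classic))%E).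
    have -> : phi @^-1` `]x1, x2]%classic = `](x1 - a) / c, (x2 - a) / c]%classic.
      apply/seteqP; split => z; rewrite /= !in_itv /= /phi => /andP[h1 h2]; apply/andP; split.
      - by rewrite ltr_pdivrMr //; lra.
      - by rewrite ler_pdivlMr //; lra.
      - by move: h1; rewrite ltr_pdivrMr //; lra.
      - by move: h2; rewrite ler_pdivlMr //; lra.
    rewrite !lebesgue_measure_itv /= !lte_fin.
    rewrite (_ : ((x1 - a) / c < (x2 - a) / c) = (x1 < x2)); last first.
      by rewrite ltr_pM2r ?invr_gt0 // ltrD2r.
    case: ifP => _; last by rewrite mule0.
    rewrite -!EFinD -EFinM; congr (_%:E); field; exact: lt0r_neq0.
  by rewrite /mscale /= H1 muleA -EFinM mulVf ?gt_eqF // mul1e.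
transitivity (\int[pushforward (@lebesgue_measure R) phi]_y g y)%E.
  by rewrite E preimage_setT.
rewrite (eq_measure_integral (mscale k (@lebesgue_measure R))); last first.
  by move=> A mA _; exact: P.
by rewrite ge0_integral_mscale.
Qed.
End L3.
Section L4.
Variable R : realType.

Lemma tcomb_cons n (l x y : R) (t s : n.-tuple R) :
  tcomb l (cons_tuple x t) (cons_tuple y s) = cons_tuple (l * x + (1 - l) * y) (tcomb l t s).
Proof.
apply: eq_from_tnth => i; rewrite tnth_mktuple.
case: (unliftP ord0 i) => [j ->|->].
  by rewrite !tnthS tnth_mktuple.
by rewrite !tnth0.
Qed.

Lemma tuple_cons_eta n (x : n.+1.-tuple R) : x = cons_tuple (thead x) [tuple of behead x].
Proof. by apply: val_inj => /=; case: x => -[]. Qed.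

Lemma leb_int_tcomb n (l : R) (x0 : n.-tuple R) (g : n.-tuple R -> \bar R) : 0 < l ->
  measurable_fun setT g -> (forall x, 0 <= g x)%E ->
  leb_int (fun x => g (tcomb l x x0)) = ((l ^+ n)^-1%:E * leb_int g)%E.
Proof.
move=> l0; elim: n x0 g => [|n IH] x0 g mg g0.
  by rewrite /= expr0 invr1 mul1e [tcomb _ _ _]tuple0.
have [y0 [s0 ->]] : exists y0 (s0 : n.-tuple R), x0 = cons_tuple y0 s0.
  by exists (thead x0), [tuple of behead x0]; exact: tuple_cons_eta.
rewrite /=.
have E x : leb_int (fun t => g (tcomb l (cons_tuple x t) (cons_tuple y0 s0))) =
   ((l ^+ n)^-1%:E * leb_int (fun t => g (cons_tuple ((1 - l) * y0 + l * x)%R t)))%E.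
  rewrite -(IH s0 (fun t => g (cons_tuple ((1 - l) * y0 + l * x) t))); last 2 first.
  - exact: mcons.
  - by move=> t; apply: g0.
  by congr leb_int; apply: funext => t; rewrite tcomb_cons addrC.
under eq_integral do rewrite E.
set G := fun x : R => leb_int (fun t : n.-tuple R => g (cons_tuple x t)).
have mG : measurable_fun setT G by apply: mleb_int_cons.
have G0 x : (0 <= G x)%E by apply: leb_int_ge0 => t; apply: g0.
have mA : measurable_fun setT (fun x : R => G ((1 - l) * y0 + l * x)).
  apply: (measurableT_comp mG).
  by apply: measurable_funD => //; apply: measurable_funM.
have k0 : (0 <= (l ^- n)%:E)%E by rewrite lee_fin invr_ge0 exprn_ge0 // ltW.
rewrite ge0_integralZl //; last by move=> x _; apply: G0.
rewrite (@cv1 R _ _ _ l0 mG G0) muleA -EFinM exprS invfM mulrC.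
by [].
Qed.
End L4.
Section L5.
Variable R : realType.

Lemma measurable_tcomb n (l : R) (x0 : n.-tuple R) :
  measurable_fun setT (fun x : n.-tuple R => tcomb l x x0).
Proof.
apply/measurable_fun_tnthP => i /=.
rewrite (_ : _ \o _ = fun x : n.-tuple R => l * tnth x i + (1 - l) * tnth x0 i); last first.
  by apply: funext => x /=; rewrite tnth_mktuple.
apply: measurable_funD => //; apply: measurable_funM => //; exact: measurable_tnth.
Qed.

Lemma measurable_sqrt_comp d (T : measurableType d) (h : T -> R) :
  measurable_fun setT h -> measurable_fun setT (fun x => Num.sqrt (h x)).
Proof.
move=> mh; apply: (measurableT_comp _ mh).
exact: continuous_measurable_fun (@sqrt_continuous R).
Qed.

Lemma KL n (f : n.-tuple R -> R) (x0 : n.-tuple R) :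
  prob_density f -> log_concave f ->
  (leb_int (fun x => (Num.sqrt (f x0) * Num.sqrt (f x))%:E) <= (2 ^+ n)%:E)%E.
Proof.
move=> [mf [f0 f1]] [_ lc].
have h2 : 0 < (2^-1 : R) by rewrite invr_gt0.
have -> : ((2 ^+ n)%:E = ((2^-1 : R) ^+ n)^-1%:E * leb_int (fun x => (f x)%:E))%E.
  by rewrite f1 mule1 exprVn invrK.
have mF : measurable_fun setT (fun x => (f x)%:E) by exact/measurable_EFinP.
have F0 x : (0 <= (f x)%:E)%E by rewrite lee_fin.
rewrite -(@leb_int_tcomb R n _ x0 _ h2 mF F0).
apply: leb_int_le.
- apply/measurable_EFinP; apply: measurable_funM => //.
  exact: measurable_sqrt_comp.
- apply/measurable_EFinP; apply: (measurableT_comp mf); exact: measurable_tcomb.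
- by move=> x; rewrite lee_fin mulr_ge0 // sqrtr_ge0.
- move=> x; rewrite lee_fin.
  have := lc x x0 (2^-1).
  rewrite (_ : 1 - 2^-1 = 2^-1 :> R); last by field.
  rewrite !powR12_sqrt // mulrC; apply.
  apply/andP; split; [exact: ltW | rewrite invf_le1 //; lra].
Qed.
End L5.
Section L6.
Variable R : realType.

Lemma two_exp_le (k : nat) : (2 : R) ^+ k <= expR k%:R.
Proof.
elim: k => [|k IH]; first by rewrite expr0 expR0.
rewrite exprS (_ : k.+1%:R = 1 + k%:R :> R); last by rewrite mulrS.
rewrite expRD; apply: ler_pM => //.
have := expR_ge1Dx (1 : R); lra.
Qed.

Lemma sqrt_expR (x : R) : Num.sqrt (expR x) = expR (x / 2).
Proof.
rewrite -[in LHS](_ : expR (x / 2) ^+ 2 = expR x).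
  by rewrite sqrtr_sqr ger0_norm // expR_ge0.
by rewrite expr2 -expRD; congr expR; field.
Qed.

Lemma num_bound (t : R) (n : nat) (m p : R) : 0 < m -> m * expR (-1) < p ->
  6 * n.+1%:R <= t ->
  Num.sqrt (expR (- t) * m) / Num.sqrt p * 2 ^+ n.+1 <= expR (- t / 5).
Proof.
move=> m0 mp ht.
have e0 := expR_gt0 (-1 : R).
have p0 : 0 < p by apply: lt_trans mp; exact: mulr_gt0.
have mp' : m / p <= expR 1.
  rewrite ler_pdivrMr //.
  have : m * expR (-1) * expR 1 < p * expR 1 by rewrite ltr_pM2r // expR_gt0.
  by rewrite -mulrA -expRD addNr expR0 mulr1 mulrC => /ltW.
have H1 : Num.sqrt (expR (- t) * m) / Num.sqrt p <= expR ((1 - t) / 2).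
  rewrite -sqrtrV ?(ltW p0) // -sqrtrM ?mulr_ge0 ?expR_ge0 ?(ltW m0) //.
  rewrite -sqrt_expR ler_sqrt ?expR_ge0 //.
  rewrite -mulrA (addrC 1) expRD ler_pM2l ?expR_gt0 //.
have H2 := two_exp_le n.+1.
apply: le_trans (_ : expR ((1 - t) / 2) * expR n.+1%:R <= _).
  by apply: ler_pM => //; rewrite ?divr_ge0 ?sqrtr_ge0 ?exprn_ge0.
rewrite -expRD ler_expR.
have : (1 : R) <= n.+1%:R by rewrite ler1n.
lra.
Qed.
End L6.
Theorem lemma3p1 (R : realType) (n : nat) (f : n.-tuple R -> R) :
  prob_density f -> log_concave f -> centered f ->
  forall t : R, (6 * n%:R <= t) ->
    (dens_measure f (superlevel f t) >= (1 - expR (- t / 5))%:E)%E.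
Proof.
move=> pf lc _ t ht.
have [mf [f0 f1]] := pf.
have mF : measurable_fun setT (fun x => (f x)%:E) by exact/measurable_EFinP.
have F0 x : (0 <= (f x)%:E)%E by rewrite lee_fin.
have Fsup x : ((f x)%:E <= fsup f)%E by apply: ereal_sup_ubound; exists x.
case: n => [|n] in f pf lc ht mf f0 f1 mF F0 Fsup *.
  have e (x : 0.-tuple R) : x = [tuple] := tuple0 x.
  have f1' : f [tuple] = 1 by case: f1.
  have S0 : superlevel f t [tuple].
    rewrite /superlevel /= f1'.
    have s1 : (fsup f <= 1%E)%E.
      by apply: ge_ereal_sup => _ [x _ <-]; rewrite (e x) f1'.
    apply: le_trans (_ : ((expR (- t))%:E * 1%E <= _)%E).
      by apply: lee_wpmul2l => //; rewrite lee_fin expR_ge0.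
    rewrite mule1 lee_fin expR_le1; rewrite mulr0n mulr0 in ht; lra.
  rewrite /dens_measure /= indicE mem_set // mul1r f1' lee_fin.
  have := expR_ge0 (- t / 5); lra.
pose x00 : n.+1.-tuple R := nseq_tuple n.+1 0.
case EM : (fsup f) => [m| |]; last first.
- by move: (le_trans (F0 x00) (Fsup x00)); rewrite EM leeNy_eq.
- exfalso.
  set I := leb_int (fun x => (Num.sqrt (f x))%:E).
  have mSq : measurable_fun setT (fun x => (Num.sqrt (f x))%:E).
    exact/measurable_EFinP/measurable_sqrt_comp.
  have Sq0 x : (0 <= (Num.sqrt (f x))%:E)%E by rewrite lee_fin sqrtr_ge0.
  have I0 : (0 <= I)%E by apply: leb_int_ge0.
  have hq (q : R) : 0 <= q -> (q%:E * I <= (2 ^+ n.+1)%:E)%E.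
    move=> q0.
    have [_ [x0 _ <-]] : exists2 y, [set (f x)%:E | x in setT] y & ((q ^+ 2)%:E < y)%E.
      by apply: ereal_sup_gt; rewrite -/(fsup f) EM ltey.
    rewrite lte_fin => hq2.
    apply: (le_trans _ (@KL R _ f x0 pf lc)).
    rewrite (_ : (fun x => (Num.sqrt (f x0) * Num.sqrt (f x))%:E) =
       (fun x => (Num.sqrt (f x0))%:E * (Num.sqrt (f x))%:E)%E); last first.
      by apply: funext => x; rewrite EFinM.
    rewrite leb_intZ // ?lee_fin ?sqrtr_ge0 //.
    apply: lee_wpmul2r => //; rewrite lee_fin.
    by rewrite -(ger0_norm q0) -sqrtr_sqr ler_sqrt // ltW.
  have Ieq : I = 0%E.
    have := hq 1 ler01; move: I0.
    case: I hq => [r| |] hq I0 h1; last by [].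
    + rewrite lee_fin in I0; apply/eqP; rewrite eqe eq_le I0 andbT.
      rewrite leNgt; apply/negP => r0.
      have := hq (2 ^+ n.+1 / r + 1).
      rewrite -EFinM lee_fin => /(_ _)/wrap[]; first by rewrite addr_ge0 // divr_ge0 ?exprn_ge0 ?ltW.
      rewrite mulrDl mul1r divfK ?gt_eqF //.
      lra.
    + by rewrite mul1e leye_eq in h1.
  have hmin (k : nat) : leb_int (fun x => (Num.min (f x) k%:R)%:E) = 0%E.
    have mk : measurable_fun setT (fun x => (Num.min (f x) k%:R)%:E).
      by apply/measurable_EFinP; apply: measurable_minr.
    have k0 x : (0 <= (Num.min (f x) k%:R)%:E)%E by rewrite lee_fin le_min f0 ler0n.
    apply/eqP; rewrite eq_le leb_int_ge0 // andbT.
    apply: (@le_trans _ _ (leb_int (fun x => (Num.sqrt k%:R)%:E * (Num.sqrt (f x))%:E)%E)).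
      apply: leb_int_le => //.
        by apply: measurable_funeM.
      move=> x; rewrite -EFinM lee_fin.
      have u0 := sqrtr_ge0 (f x); have v0 := sqrtr_ge0 (k%:R : R).
      have uu := sqr_sqrtr (f0 x); have vv := sqr_sqrtr (ler0n R k).
      have [h|h] := leP (f x) k%:R.

        have : Num.sqrt (f x) <= Num.sqrt k%:R by rewrite ler_sqrt.
        rewrite expr2 in uu; nra.

      have : Num.sqrt k%:R <= Num.sqrt (f x) by rewrite ler_sqrt // ltW.
      rewrite expr2 in vv; nra.
    by rewrite leb_intZ // ?lee_fin ?sqrtr_ge0 // -/I Ieq mule0.
  move: f1.
  rewrite (_ : (fun x => (f x)%:E) =
      (fun x => limn (fun k => (Num.min (f x) k%:R)%:E))); last first.
    apply: funext => x; apply/esym/lim_near_cst => //.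
    near=> k; rewrite min_l //.
    near: k; exact: nbhs_infty_ger.
  rewrite leb_int_mct.
  + under eq_fun do rewrite hmin.
    by rewrite lim_cst // => /eqP; rewrite eq_sym onee_eq0.
  + by move=> k; apply/measurable_EFinP; apply: measurable_minr.
  + by move=> k x; rewrite lee_fin le_min f0 ler0n.
  + move=> x a b ab; rewrite lee_fin; apply: le_min2 => //.
    by rewrite ler_nat.
have m0 : 0 < m.
  have : 0 <= m by rewrite -lee_fin -EM; exact: le_trans (F0 x00) (Fsup x00).
  rewrite le_eqVlt => /predU1P[m0e|//].
  have fz x : f x = 0.
    apply/eqP; rewrite eq_le f0 andbT -lee_fin.
    by rewrite (le_trans (Fsup x)) // EM -m0e.
  move: f1; rewrite (_ : (fun x => (f x)%:E) = (fun x => 0%:E * (f x)%:E)%E).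
    by rewrite leb_intZ // mul0e => /eqP; rewrite eq_sym onee_eq0.
  by apply/funext => x; rewrite fz mul0e.
have [_ [x0 _ <-]] : exists2 y, [set (f x)%:E | x in setT] y & ((m * expR (-1))%:E < y)%E.
  apply: ereal_sup_gt; rewrite -/(fsup f) EM lte_fin gtr_pMr // expR_lt1; lra.
rewrite lte_fin => hx0.
set p := f x0.
set c := expR (- t) * m.
have Sdef : superlevel f t = [set x | c <= f x].
  by rewrite /superlevel EM; apply/funext => x /=; rewrite -EFinM lee_fin.
rewrite /dens_measure Sdef.
set S := [set x | c <= f x].
have mS : measurable S.
  have mi : measurable (`[c, +oo[%classic : set R) by exact: measurable_itv.
  have := mf measurableT _ mi; rewrite setTI.
  rewrite (_ : f @^-1` `[c, +oo[%classic = S) //.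
  by apply/seteqP; split => x /=; rewrite in_itv /= andbT.
have mSC : measurable (~` S) by exact: measurableC.
have mI (A : set (n.+1.-tuple R)) : measurable A ->
    measurable_fun setT (fun x => ((\1_A x : R) * f x)%:E).
  move=> mA; apply/measurable_EFinP; apply: measurable_funM => //.
have I0 (A : set (n.+1.-tuple R)) x : (0 <= ((\1_A x : R) * f x)%:E)%E.
  by rewrite lee_fin mulr_ge0 // indicE ler0n.
have hsplit : leb_int (fun x => (f x)%:E) =
    (leb_int (fun x => ((\1_S x : R) * f x)%:E) + leb_int (fun x => ((\1_(~` S) x : R) * f x)%:E))%E.
  rewrite -leb_intD; try exact: mI; try exact: I0.
  f_equal; apply: funext => x.
  rewrite -EFinD -mulrDl !indicE in_setC.
  by case: (x \in S) => /=; rewrite ?addr0 ?add0r mul1r.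
set a := leb_int (fun x => ((\1_(~` S) x : R) * f x)%:E).
have hb : ((Num.sqrt p)%:E * a <= (Num.sqrt c)%:E * (2 ^+ n.+1)%:E)%E.
  have p0 : 0 < p by apply: lt_trans hx0; rewrite mulr_gt0 // expR_gt0.
  rewrite -leb_intZ; [| exact: mI mSC | exact: I0 | by rewrite lee_fin sqrtr_ge0].
  apply: (@le_trans _ _ ((Num.sqrt c)%:E * leb_int (fun x => (Num.sqrt p * Num.sqrt (f x))%R%:E))%E); last first.
    by apply: lee_wpmul2l; [rewrite lee_fin sqrtr_ge0 | exact: KL].
  have mq : measurable_fun setT (fun x => (Num.sqrt p * Num.sqrt (f x))%:E).
    apply/measurable_EFinP; apply: measurable_funM => //; exact: measurable_sqrt_comp.
  have q0 x : (0 <= (Num.sqrt p * Num.sqrt (f x))%:E)%E.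
    by rewrite lee_fin mulr_ge0 ?sqrtr_ge0.
  rewrite -leb_intZ; [| exact: mq | exact: q0 | by rewrite lee_fin sqrtr_ge0].
  apply: leb_int_le.
  - by apply: measurable_funeM; exact: mI.
  - by apply: measurable_funeM; exact: mq.
  - by move=> x; apply: mule_ge0; [rewrite lee_fin sqrtr_ge0 | exact: I0].
  move=> x; rewrite -!EFinM lee_fin indicE in_setC.
  have u0 := sqrtr_ge0 (f x); have w0 := sqrtr_ge0 p; have v0 := sqrtr_ge0 c.
  case: (boolP (x \in S)) => hS /=.
    by rewrite mul0r mulr0 !mulr_ge0.
  have hc : ~~ (c <= f x) by apply: contra hS => h; rewrite in_setE.
  rewrite mul1r -[in X in _ * X <= _](sqr_sqrtr (f0 x)).
  have : Num.sqrt (f x) <= Num.sqrt c.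
    rewrite ler_sqrt; first by rewrite ltW // ltNge.
    by rewrite mulr_ge0 ?expR_ge0 ?ltW.
  move=> uv.
  have uv' : 0 <= Num.sqrt c - Num.sqrt (f x) by rewrite subr_ge0.
  have := mulr_ge0 (mulr_ge0 w0 u0) uv'.
  rewrite expr2; nra.
have p0 : 0 < p by apply: lt_trans hx0; rewrite mulr_gt0 // expR_gt0.
have sp0 : 0 < Num.sqrt p by rewrite sqrtr_gt0.
have a0 : (0 <= a)%E by apply: leb_int_ge0 => x; exact: I0.
have hS0 : (0 <= leb_int (fun x => ((\1_S x : R) * f x)%:E))%E.
  by apply: leb_int_ge0 => x; exact: I0.
move: hsplit hb a0 hS0; rewrite f1 -/a.
set s := leb_int _.
case: a => [ra| |] hsplit hb a0 hS0; last by []; last first.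
  rewrite gt0_muley ?lte_fin // in hb.
have hra : ra <= Num.sqrt c / Num.sqrt p * 2 ^+ n.+1.
  by rewrite mulrAC ler_pdivlMr // mulrC -lee_fin EFinM.
have := @num_bound R _ _ _ _ m0 hx0 ht; rewrite -/c => hnb.
case: s hsplit hS0 => [rs| |] hsplit hS0 //.
move: hsplit => /eqP; rewrite -EFinD eqe => /eqP hs.
rewrite lee_fin; lra.
Unshelve. all: by end_near. Qed.
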